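(* The class of liberal extensions is Morita invariant: if $A/B$ is a liberal extension and $A/B$ is Morita equivalent to $A'/B'$, then $A'/B'$ is a liberal extension.
   Context: All rings have identity, subrings contain the identity, modules are unital; a ring extension $A/B$ means $B$ is a subring of $A$. $V_A(B)=\{a\in A\mid ba=ab \text{ for all } b\in B\}$. $A/B$ is a liberal extension if there are finitely many $v_1,\dots,v_n\in V_A(B)$ with $A=\sum_{i=1}^n v_iB$. For bimodules ${}_AX_{A'}$, ${}_AY_{A'}$, write $X\mid Y$ if $X$ is isomorphic to a direct summand of a finite direct sum of copies of $Y$, and $X\sim Y$ if $X\mid Y$ and $Y\mid X$. $\mathrm{End}^r({}_AM)$ denotes the ring of left $A$-endomorphisms of $M$ acting on the right. A bimodule ${}_AM_{A'}$ is a Morita module if ${}_AM\sim{}_AA$ and $\mathrm{End}^r({}_AM)=A'$. Ring extensions $A/B$ and $A'/B'$ are Morita equivalent if there exist Morita modules ${}_AM_{A'}$ and ${}_BN_{B'}$ with ${}_AA\otimes_BN_{B'}\cong{}_AM_{B'}$. A class $\mathscr C$ of ring extensions is Morita invariant if whenever $A/B\in\mathscr C$ and $A/B$ is Morita equivalent to $A'/B'$, then $A'/B'\in\mathscr C$. *)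

(* Defs.v *)
(* Rings are arbitrary (possibly noncommutative) unital rings
   (pzRingType); a ring extension A/B is encoded by an injective unital ring
   morphism iota : B -> A (B identified with its image, a subring of A). *)
From HB Require Import structures.
From mathcomp Require Import all_boot all_order all_algebra.
Set Implicit Arguments. Unset Strict Implicit. Unset Printing Implicit Defensive.
Import GRing.Theory.
Local Open Scope ring_scope.

Record Lmod (R : pzRingType) := {
  lm_car :> zmodType;
  lm_act : R -> lm_car -> lm_car;
  lm_actDr : forall r x y, lm_act r (x + y) = lm_act r x + lm_act r y;
  lm_actDl : forall r s x, lm_act (r + s) x = lm_act r x + lm_act s x;
  lm_actA : forall r s x, lm_act (r * s) x = lm_act r (lm_act s x);
  lm_act1 : forall x, lm_act 1 x = x
}.

Record Bimod (R S : pzRingType) := {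
  bm_car :> zmodType;
  bm_lact : R -> bm_car -> bm_car;
  bm_ract : bm_car -> S -> bm_car;
  bm_lactDr : forall r x y, bm_lact r (x + y) = bm_lact r x + bm_lact r y;
  bm_lactDl : forall r s x, bm_lact (r + s) x = bm_lact r x + bm_lact s x;
  bm_lactA : forall r s x, bm_lact (r * s) x = bm_lact r (bm_lact s x);
  bm_lact1 : forall x, bm_lact 1 x = x;
  bm_ractDl : forall x y s, bm_ract (x + y) s = bm_ract x s + bm_ract y s;
  bm_ractDr : forall x s t, bm_ract x (s + t) = bm_ract x s + bm_ract x t;
  bm_ractA : forall x s t, bm_ract x (s * t) = bm_ract (bm_ract x s) t;
  bm_ract1 : forall x, bm_ract x 1 = x;
  bm_lractA : forall r x s, bm_lact r (bm_ract x s) = bm_ract (bm_lact r x) s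
}.

Definition lmod_of (R S : pzRingType) (M : Bimod R S) : Lmod R :=
  @Build_Lmod R M (@bm_lact R S M) (@bm_lactDr R S M) (@bm_lactDl R S M)
    (@bm_lactA R S M) (@bm_lact1 R S M).

Definition regular_lmod (R : pzRingType) : Lmod R :=
  @Build_Lmod R R (fun r x => r * x) (fun r x y => mulrDr r x y)
    (fun r s x => mulrDl r s x) (fun r s x => esym (mulrA r s x)) (fun x => mul1r x).

Definition lmod_hom (R : pzRingType) (X Y : Lmod R) (f : X -> Y) : Prop :=
  (forall x y, f (x + y) = f x + f y) /\
  (forall r x, f (lm_act r x) = lm_act r (f x)).

(* Y^n is represented as functions 'I_n -> Y with componentwise structure. *)
Definition lmod_divides (R : pzRingType) (X Y : Lmod R) : Prop :=
  exists (n : nat) (f : X -> 'I_n -> Y) (g : ('I_n -> Y) -> X),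
    [/\ (forall x y i, f (x + y) i = f x i + f y i),
        (forall r x i, f (lm_act r x) i = lm_act r (f x i)),
        (forall u v, g (fun i => u i + v i) = g u + g v),
        (forall r u, g (fun i => lm_act r (u i)) = lm_act r (g u)) &
        (forall x, g (f x) = x)].

Definition lmod_sim (R : pzRingType) (X Y : Lmod R) : Prop :=
  lmod_divides X Y /\ lmod_divides Y X.

(* End^r({}_R M) = S : the map S -> End^r({}_R M), s |-> (m |-> m s), is
   bijective. *)
Definition end_is (R S : pzRingType) (M : Bimod R S) : Prop :=
  forall phi : M -> M, lmod_hom (X := lmod_of M) (Y := lmod_of M) phi ->
    exists! s : S, forall m, phi m = bm_ract m s.

Definition morita_module (R S : pzRingType) (M : Bimod R S) : Prop :=
  lmod_sim (lmod_of M) (regular_lmod R) /\ end_is M.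

Definition centralizes (A B : pzRingType) (iota : {rmorphism B -> A}) (v : A) :=
  forall b : B, iota b * v = v * iota b.

Definition liberal (A B : pzRingType) (iota : {rmorphism B -> A}) : Prop :=
  exists (n : nat) (v : 'I_n -> A),
    (forall i, centralizes iota (v i)) /\
    (forall a : A, exists c : 'I_n -> B, a = \sum_(i < n) v i * iota (c i)).

(* {}_A A (x)_B N_{B'} ~= {}_A M_{B'} as A-B' bimodules, expressed through the
   universal property of the tensor product: there is a B-balanced biadditive
   map beta : A x N -> M, A-linear on the left and B'-linear on the right
   (B' acting on M through iota'), through which every B-balanced biadditive
   map A x N -> Z (Z an abelian group) factors uniquely by an additive map. *)
Definition tensor_iso (A B A' B' : pzRingType)
  (iota : {rmorphism B -> A}) (iota' : {rmorphism B' -> A'})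
  (M : Bimod A A') (N : Bimod B B') : Prop :=
  exists beta : A -> N -> M,
  [/\ (forall a1 a2 n, beta (a1 + a2) n = beta a1 n + beta a2 n),
      (forall a n1 n2, beta a (n1 + n2) = beta a n1 + beta a n2),
      (forall a b n, beta (a * iota b) n = beta a (bm_lact b n)),
      (forall x a n, beta (x * a) n = bm_lact x (beta a n)) /\
      (forall a n b', beta a (bm_ract n b') = bm_ract (beta a n) (iota' b')) &
      (forall (Z : zmodType) (gam : A -> N -> Z),
         (forall a1 a2 n, gam (a1 + a2) n = gam a1 n + gam a2 n) ->
         (forall a n1 n2, gam a (n1 + n2) = gam a n1 + gam a n2) ->
         (forall a b n, gam (a * iota b) n = gam a (bm_lact b n)) ->
         (exists h : M -> Z, (forall m1 m2, h (m1 + m2) = h m1 + h m2) /\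
                             (forall a n, h (beta a n) = gam a n)) /\
         (forall h1 h2 : M -> Z,
            (forall m1 m2, h1 (m1 + m2) = h1 m1 + h1 m2) ->
            (forall m1 m2, h2 (m1 + m2) = h2 m1 + h2 m2) ->
            (forall a n, h1 (beta a n) = gam a n) ->
            (forall a n, h2 (beta a n) = gam a n) ->
            forall m, h1 m = h2 m))].

Definition morita_equivalent (A B A' B' : pzRingType)
  (iota : {rmorphism B -> A}) (iota' : {rmorphism B' -> A'}) : Prop :=
  exists (M : Bimod A A') (N : Bimod B B'),
    [/\ morita_module M, morita_module N & tensor_iso iota iota' M N].

(* Main.v *)
From HB Require Import structures.
Require Import Defs.
From mathcomp Require Import all_boot all_order all_algebra.
From mathcomp Require Import boolp.
Set Implicit Arguments. Unset Strict Implicit. Unset Printing Implicit Defensive.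
Import GRing.Theory.
Local Open Scope ring_scope.

Record subg (M : zmodType) := Subg {
  sg : M -> Prop; sg0 : sg 0; sgB : forall x y, sg x -> sg y -> sg (x - y) }.

Section QuotDefs.
Variables (M : zmodType) (S : subg M).
Lemma sgN x : sg S x -> sg S (- x).
Proof. by move=> h; rewrite -sub0r; apply: sgB => //; apply: sg0. Qed.
Lemma sgD x y : sg S x -> sg S y -> sg S (x + y).
Proof. by move=> hx hy; rewrite -[y]opprK; apply: sgB => //; apply: sgN. Qed.
Definition coset (m : M) : M -> Prop := fun x => sg S (x - m).
Definition quot := {X : M -> Prop | exists m, X = coset m}.
End QuotDefs.

HB.instance Definition _ (M : zmodType) (S : subg M) := gen_eqMixin (quot S).
HB.instance Definition _ (M : zmodType) (S : subg M) := gen_choiceMixin (quot S).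

Section Quot.
Variables (M : zmodType) (S : subg M).
Definition qpi (m : M) : quot S := exist _ (coset S m) (ex_intro _ m erefl).
Definition rep (X : quot S) : M := sval (cid (svalP X)).
Lemma repP X : X = qpi (rep X).
Proof.
rewrite /rep; case: (cid _) => m /= e; case: X e => X pX /= e.
subst X; congr exist; exact: Prop_irrelevance.
Qed.
Lemma qpi_eq a b : sg S (a - b) -> qpi a = qpi b.
Proof.
move=> h; have e : coset S a = coset S b.
  apply: funext => x; apply: propext; rewrite /coset; split => hx.
    by have := sgD hx h; rewrite addrA subrK.
  by have := sgB hx h; rewrite opprB addrA subrK.
rewrite /qpi; move: (ex_intro _ a _) (ex_intro _ b _); rewrite e => p1 p2.
by congr exist; apply: Prop_irrelevance.
Qed.
Lemma qpi_inv a b : qpi a = qpi b -> sg S (a - b).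
Proof.
move=> e; have : coset S a a by rewrite /coset subrr; apply: sg0.
by have -> : coset S a = coset S b by move: e => /(congr1 sval).
Qed.
Definition qadd (X Y : quot S) := qpi (rep X + rep Y).
Definition qopp (X : quot S) := qpi (- rep X).
Definition qzero := qpi 0.
Lemma rep_qpi m : sg S (rep (qpi m) - m).
Proof. by apply: qpi_inv; rewrite -repP. Qed.
Lemma qaddE a b : qadd (qpi a) (qpi b) = qpi (a + b).
Proof.
apply: qpi_eq; rewrite opprD addrACA; apply: sgD; exact: rep_qpi.
Qed.
Lemma qoppE a : qopp (qpi a) = qpi (- a).
Proof. by apply: qpi_eq; rewrite opprK addrC -opprB; apply: sgN; apply: rep_qpi. Qed.
Lemma quot_ind (P : quot S -> Prop) : (forall m, P (qpi m)) -> forall X, P X.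
Proof. by move=> h X; rewrite (repP X). Qed.
Lemma qaddA : associative qadd.
Proof. by elim/quot_ind=> a; elim/quot_ind=> b; elim/quot_ind=> c; rewrite !qaddE addrA. Qed.
Lemma qaddC : commutative qadd.
Proof. by elim/quot_ind=> a; elim/quot_ind=> b; rewrite !qaddE addrC. Qed.
Lemma qadd0 : left_id qzero qadd.
Proof. by elim/quot_ind=> a; rewrite /qzero qaddE add0r. Qed.
Lemma qaddN : left_inverse qzero qopp qadd.
Proof. by elim/quot_ind=> a; rewrite qoppE qaddE addNr. Qed.
HB.instance Definition _ := GRing.isZmodule.Build (quot S) qaddA qaddC qadd0 qaddN.
Lemma qpiD a b : qpi (a + b) = qpi a + qpi b.
Proof. by rewrite -qaddE. Qed.
Lemma qpi0 m : qpi m = 0 -> sg S m.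
Proof. by move=> /qpi_inv; rewrite subr0. Qed.
Lemma qpiS m : sg S m -> qpi m = 0.
Proof. by move=> h; apply: qpi_eq; rewrite subr0. Qed.
End Quot.

Section Gen.
Variables (G H : zmodType) (f : G -> H) (fD : forall x y, f (x + y) = f x + f y).
Lemma add_0 : f 0 = 0.
Proof. by apply: (addrI (f 0)); rewrite -fD !addr0. Qed.
Lemma add_sum I r (P : pred I) F :
  f (\sum_(i <- r | P i) F i) = \sum_(i <- r | P i) f (F i).
Proof. exact: (big_morph f fD add_0). Qed.
Lemma add_N x : f (- x) = - f x.
Proof. by apply: (addrI (f x)); rewrite -fD !subrr add_0. Qed.
Lemma add_B x y : f (x - y) = f x - f y.
Proof. by rewrite fD add_N. Qed.
End Gen.

Section BimodLemmas.
Variables (R S : pzRingType) (X : Bimod R S).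
Lemma bm_lact_sum r I rs (P : pred I) (F : I -> X) :
  bm_lact r (\sum_(i <- rs | P i) F i) = \sum_(i <- rs | P i) bm_lact r (F i).
Proof. exact: (add_sum (bm_lactDr r)). Qed.
Lemma bm_ract_sumr (m : X) I rs (P : pred I) (F : I -> S) :
  bm_ract m (\sum_(i <- rs | P i) F i) = \sum_(i <- rs | P i) bm_ract m (F i).
Proof. exact: (add_sum (f := fun s => bm_ract m s) (bm_ractDr m)). Qed.
End BimodLemmas.

Theorem proposition3p2 (A B A' B' : pzRingType)
  (iota : {rmorphism B -> A}) (iota' : {rmorphism B' -> A'}) :
  injective iota -> injective iota' ->
  liberal iota -> morita_equivalent iota iota' -> liberal iota'.
Proof.
move=> _ _ [n [v [vC vgen]]] [M [N [[_ endM] [[dN _] endN] [be [bD1 bD2 bB [bA bB'] univ]]]]].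
have ext : forall (Z : zmodType) (h1 h2 : M -> Z),
    (forall x y, h1 (x + y) = h1 x + h1 y) -> (forall x y, h2 (x + y) = h2 x + h2 y) ->
    (forall a x, h1 (be a x) = h2 (be a x)) -> forall m, h1 m = h2 m.
  move=> Z h1 h2 h1D h2D e m.
  have H1 : forall a1 a2 x, h1 (be (a1 + a2) x) = h1 (be a1 x) + h1 (be a2 x).
    by move=> *; rewrite bD1 h1D.
  have H2 : forall a x1 x2, h1 (be a (x1 + x2)) = h1 (be a x1) + h1 (be a x2).
    by move=> *; rewrite bD2 h1D.
  have H3 : forall a b x, h1 (be (a * iota b) x) = h1 (be a (bm_lact b x)).
    by move=> *; rewrite bB.
  have [_ U] := univ Z (fun a x => h1 (be a x)) H1 H2 H3.
  exact: (U h1 h2 h1D h2D (fun _ _ => erefl) (fun a x => esym (e a x)) m).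
have ract_inj : forall x y : A', (forall m : M, bm_ract m x = bm_ract m y) -> x = y.
  move=> x y e.
  have [s [_ U]] := endM (fun m => bm_ract m x)
    (conj (fun m1 m2 => bm_ractDl m1 m2 x) (fun r m => esym (bm_lractA r m x))).
  rewrite -(U x (fun=> erefl)); exact: U y e.
have be0 : forall a, be a 0 = 0 by move=> a; apply: (add_0 (bD2 a)).
have beB : forall a x y, be a (x - y) = be a x - be a y by move=> a; apply: (add_B (bD2 a)).
have be_sum1 : forall (F : 'I_n -> A) x, be (\sum_i F i) x = \sum_i be (F i) x.
  by move=> F x; apply: (add_sum (f := fun a => be a x)) => *; rewrite bD1.
have be_sum2 : forall I r (P : pred I) a (F : I -> N), be a (\sum_(i <- r | P i) F i) = \sum_(i <- r | P i) be a (F i).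
  by move=> I r P a F; apply: (add_sum (bD2 a)).
have span : forall m : M, exists w : 'I_n -> N, m = \sum_i be (v i) (w i).
  pose P := fun m : M => exists w : 'I_n -> N, m = \sum_i be (v i) (w i).
  have P0 : P 0.
    by exists (fun=> 0); rewrite big1 // => i _; rewrite be0.
  have PB : forall x y, P x -> P y -> P (x - y).
    move=> x y [w1 ->] [w2 ->]; exists (fun i => w1 i - w2 i).
    by rewrite -sumrB; apply: eq_bigr => i _; rewrite beB.
  pose SS := Subg P0 PB.
  move=> m; apply: (qpi0 (S := SS)).
  apply: (ext (quot SS) (qpi SS) (fun=> 0) (qpiD SS) (fun _ _ => esym (addr0 0))).
  move=> a x; apply: qpiS => /=.
  have [c ->] := vgen a; exists (fun i => bm_lact (c i) x).
  by rewrite be_sum1; apply: eq_bigr => i _; rewrite bB.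
have vpE : forall i, exists v' : A', centralizes iota' v' /\
    forall a x, bm_ract (be a x) v' = be (a * v i) x.
  move=> i.
  have H1 : forall a1 a2 x, be ((a1 + a2) * v i) x = be (a1 * v i) x + be (a2 * v i) x.
    by move=> *; rewrite mulrDl bD1.
  have H2 : forall a x1 x2, be (a * v i) (x1 + x2) = be (a * v i) x1 + be (a * v i) x2.
    by move=> *; rewrite bD2.
  have H3 : forall a b x, be (a * iota b * v i) x = be (a * v i) (bm_lact b x).
    by move=> *; rewrite -mulrA vC mulrA bB.
  have [[h [hD hE]] _] := univ M (fun a x => be (a * v i) x) H1 H2 H3.
  have hA : forall r m, h (bm_lact r m) = bm_lact r (h m).
    move=> r; apply: ext.
    - by move=> x y; rewrite bm_lactDr hD.
    - by move=> x y; rewrite hD bm_lactDr.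
    - by move=> a x; rewrite -bA !hE -bA mulrA.
  have [v' [Hv' _]] := endM h (conj hD hA).
  exists v'; split; last by move=> a x; rewrite -Hv' hE.
  move=> b; apply: ract_inj => m; rewrite !bm_ractA -!Hv'.
  apply: (ext M (fun m => h (bm_ract m (iota' b))) (fun m => bm_ract (h m) (iota' b))).
  - by move=> x y; rewrite bm_ractDl hD.
  - by move=> x y; rewrite hD bm_ractDl.
  - by move=> a x; rewrite -bB' !hE bB'.
case: (choice vpE) => vp vpP.
exists n, vp; split; first by move=> i; case: (vpP i).
move=> a'.
have [k [f [g [fD fB gD gB gf]]]] := dN.
pose psi x := bm_ract (be 1 x) a'.
have psiD : forall x y, psi (x + y) = psi x + psi y.
  by move=> x y; rewrite /psi bD2 bm_ractDl.
have psiB : forall b x, psi (bm_lact b x) = bm_lact (iota b) (psi x).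
  move=> b x; rewrite /psi -bB mul1r.
  have -> : be (iota b) x = bm_lact (iota b) (be 1 x) by rewrite -bA mulr1.
  by rewrite bm_lractA.
have Wex : forall j : 'I_k, exists w : 'I_n -> N,
    psi (g (fun i => (i == j)%:R)) = \sum_i be (v i) (w i) := fun j => span _.
case: (choice Wex) => W WP.
have g0 : g (fun=> 0) = 0.
  have h := gD (fun=> 0) (fun=> 0); rewrite /= addr0 in h.
  by apply: (addrI (g (fun=> 0))); rewrite -h addr0.
have gsum : forall (r : seq 'I_k) (F : 'I_k -> 'I_k -> B),
    g (fun i => \sum_(j <- r) F j i) = \sum_(j <- r) g (F j).
  elim=> [|j r IH] F.
    by rewrite big_nil -g0; congr g; apply: funext => i; rewrite big_nil.
  rewrite big_cons -IH -gD; congr g; apply: funext => i; by rewrite big_cons.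
have gE : forall u, g u = \sum_j bm_lact (u j) (g (fun i => (i == j)%:R)).
  move=> u; transitivity (g (fun i => \sum_(j < k) u j * (i == j)%:R)).
    congr g; apply: funext => i.
    rewrite (bigD1 i) //= eqxx mulr1 big1 ?addr0 // => j /negbTE.
    by rewrite eq_sym => ->; rewrite mulr0.
  rewrite gsum; apply: eq_bigr => j _; exact: (gB (u j) (fun i => (i == j)%:R)).
have psit : forall i, exists c : B', forall x,
    \sum_j bm_lact (f x j) (W j i) = bm_ract x c.
  move=> i.
  have hD : forall x y, \sum_j bm_lact (f (x + y) j) (W j i) =
      \sum_j bm_lact (f x j) (W j i) + \sum_j bm_lact (f y j) (W j i).
    by move=> x y; rewrite -big_split; apply: eq_bigr => j _; rewrite fD bm_lactDl.
  have hB : forall r x, \sum_j bm_lact (f (bm_lact r x) j) (W j i) =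
      bm_lact r (\sum_j bm_lact (f x j) (W j i)).
    move=> r x; rewrite bm_lact_sum; apply: eq_bigr => j _.
    by have := fB r x j; rewrite /= => ->; rewrite bm_lactA.
  have [c [Hc _]] := endN (fun x => \sum_j bm_lact (f x j) (W j i)) (conj hD hB).
  by exists c.
case: (choice psit) => c cP.
have key : forall x, psi x = \sum_i be (v i) (bm_ract x (c i)).
  move=> x; rewrite -{1}(gf x) gE (add_sum psiD).
  under eq_bigr => j _ do rewrite psiB WP bm_lact_sum.
  under [RHS]eq_bigr => i _ do rewrite -cP be_sum2.
  rewrite exchange_big /=; apply: eq_bigr => j _; apply: eq_bigr => i _.
  by rewrite -bA vC bB.
exists c.
have -> : \sum_(i < n) vp i * iota' (c i) = \sum_(i < n) iota' (c i) * vp i.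
  by apply: eq_bigr => i _; case: (vpP i) => C _; rewrite C.
apply: ract_inj.
apply: (ext M (fun m => bm_ract m a') (fun m => bm_ract m (\sum_i iota' (c i) * vp i))).
- by move=> x y; rewrite bm_ractDl.
- by move=> x y; rewrite bm_ractDl.
move=> a x /=.
have -> : be a x = bm_lact a (be 1 x) by rewrite -bA mulr1.
rewrite -bm_lractA -/(psi x) key bm_lact_sum bm_ract_sumr.
apply: eq_bigr => i _.
transitivity (bm_lact a (bm_ract (bm_ract (be 1 x) (iota' (c i))) (vp i))); last by rewrite bm_ractA !bm_lractA.
by congr (bm_lact a _); rewrite -bB' (proj2 (vpP i)) mul1r.
Qed.
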